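(* Fix any vector of nodal storage capacities $Q^{\rm s}=(Q^{\rm s}_1,\dots,Q^{\rm s}_I)\ge 0$ and consider the lower-level stochastic Cournot game described in the context. At any Nash equilibrium of this game, for every node $i$, every time $t\in\{1,\dots,N_{\rm T}\}$ and every scenario $w\in\{1,\dots,N_{\rm w}\}$, the charge level $q^{\rm ch}_{itw}$ and discharge level $q^{\rm dis}_{itw}$ of the storage firm at node $i$ are not simultaneously positive; i.e. each storage firm is either in charge mode or in discharge mode (or idle).
   Context: Market model. There are $I$ nodes, time periods $t\in\{1,\dots,N_{\rm T}\}$ of length $\Delta>0$, and wind scenarios $w\in\{1,\dots,N_{\rm w}\}$ with probabilities $\Psi_w>0$. Node $i$ hosts a set $\mathcal N^{\rm cg}_i$ of classical generators, a set $\mathcal N^{\rm wg}_i$ of wind generators and one storage firm; $\mathcal N_i$ is the set of neighbouring nodes of $i$, and each pair of neighbouring nodes $i,j$ is linked by a transmission firm. The price at node $i$, time $t$, scenario $w$ is $P_{itw}=\alpha_{it}\exp\!\big(-\beta_{it}\big(q^{\rm s}_{itw}+\sum_{m\in\mathcal N^{\rm wg}_i}q^{\rm wg}_{mitw}+\sum_{n\in\mathcal N^{\rm cg}_i}q^{\rm cg}_{nitw}+\sum_{j\in\mathcal N_i}q^{\rm tr}_{ijtw}\big)\big)$ with $\alpha_{it},\beta_{it}>0$. Firms (each chooses its variables for all $t,w$ simultaneously): (1) Wind generator $m$ at node $i$: maximizes $\sum_w\Psi_w\sum_t P_{itw}q^{\rm wg}_{mitw}$ subject to $0\le q^{\rm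 wg}_{mitw}\le Q^{\rm wg}_{mitw}$ (given available wind capacities). (2) Storage firm at node $i$: chooses $q^{\rm dis}_{itw},q^{\rm ch}_{itw}\ge0$ and $q^{\rm s}_{itw}$ to maximize $\sum_w\Psi_w\sum_t\big[P_{itw}q^{\rm s}_{itw}-c^{\rm s}_i(q^{\rm dis}_{itw}+q^{\rm ch}_{itw})-\gamma^{\rm s}_i\big(P_{itw}q^{\rm s}_{itw}+P_{itw}/\beta_{it}\big)\big]$ subject to, for all $t,w$: $q^{\rm s}_{itw}=\eta^{\rm dis}_i q^{\rm dis}_{itw}-q^{\rm ch}_{itw}/\eta^{\rm ch}_i$; $q^{\rm dis}_{itw}\le\zeta^{\rm dis}_iQ^{\rm s}_i$; $q^{\rm ch}_{itw}\le\zeta^{\rm ch}_iQ^{\rm s}_i$; $0\le\sum_{k=1}^t(q^{\rm ch}_{ikw}-q^{\rm dis}_{ikw})\Delta\le Q^{\rm s}_i$. Here $c^{\rm s}_i>0$ is the unit operation cost, $\eta^{\rm ch}_i,\eta^{\rm dis}_i\in(0,1]$ are charging/discharging efficiencies, $\zeta^{\rm ch}_i,\zeta^{\rm dis}_i>0$, and $\gamma^{\rm s}_i\in\{0,1\}$ ($0$: strategic, $1$: regulated). (3) Classical generator $n$ at node $i$: maximizes $\sum_w\Psi_w\sum_t(P_{itw}-c^{\rm cg}_{ni})q^{\rm cg}_{nitw}$ subject to $0\le q^{\rm cg}_{nitw}\le Q^{\rm cg}_{ni}$, $q^{\rm cg}_{nitw}-q^{\rm cg}_{ni(t-1)w}\le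 R^{\rm up}_{ni}$, $q^{\rm cg}_{ni(t-1)w}-q^{\rm cg}_{nitw}\le R^{\rm dn}_{ni}$. (4) Transmission firm between neighbouring nodes $i,j$: chooses $q^{\rm tr}_{ijtw},q^{\rm tr}_{jitw}$ to maximize $\sum_w\Psi_w\sum_t\big[(1-\gamma^{\rm tr}_{ij})(P_{jtw}q^{\rm tr}_{jitw}+P_{itw}q^{\rm tr}_{ijtw})+\gamma^{\rm tr}_{ij}(-P_{jtw}/\beta_{jt}-P_{itw}/\beta_{it})\big]$ subject to $q^{\rm tr}_{ijtw}=-q^{\rm tr}_{jitw}$ and $-Q^{\rm tr}_{ij}\le q^{\rm tr}_{ijtw}\le Q^{\rm tr}_{ij}$, with $\gamma^{\rm tr}_{ij}\in\{0,1\}$. A Nash equilibrium is a profile of all firms' strategies in which each firm's strategy is optimal for its problem given the other firms' strategies. *)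

(* Defs.v *)
From HB Require Import structures.
From mathcomp Require Import all_boot all_order all_algebra.
From mathcomp Require Import reals sequences exp.
Set Implicit Arguments. Unset Strict Implicit. Unset Printing Implicit Defensive.
Import Order.TTheory GRing.Theory Num.Theory.
Local Open Scope ring_scope.

(* Nodes are 'I_I, time periods 'I_NT (period t+1 of the paper
   is index t here), scenarios 'I_NW.  Wind generators are indexed globally by
   'I_NWG with location locW (so N^wg_i = {m | locW m = i}); similarly the
   classical generators 'I_NCG with location locC.  Neighbourhood is the
   relation adj (N_i = {j | adj i j}). *)
Record market (R : realType) (I NT NW NWG NCG : nat) := Market {
  Delta : R;
  Psi : 'I_NW -> R;
  alpha : 'I_I -> 'I_NT -> R;
  beta : 'I_I -> 'I_NT -> R;
  adj : 'I_I -> 'I_I -> bool;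
  locW : 'I_NWG -> 'I_I;
  locC : 'I_NCG -> 'I_I;
  Qwg : 'I_NWG -> 'I_NT -> 'I_NW -> R;     (* available wind capacity *)
  ccg : 'I_NCG -> R;
  Qcg : 'I_NCG -> R;
  Rup : 'I_NCG -> R;
  Rdn : 'I_NCG -> R;
  cs : 'I_I -> R;
  eta_ch : 'I_I -> R;
  eta_dis : 'I_I -> R;
  zeta_ch : 'I_I -> R;
  zeta_dis : 'I_I -> R;
  gamma_s : 'I_I -> bool;                  (* false = 0 strategic, true = 1 regulated *)
  gamma_tr : 'I_I -> 'I_I -> bool;
  Qtr : 'I_I -> 'I_I -> R
}.

Definition market_wf (R : realType) I NT NW NWG NCG
    (M : market R I NT NW NWG NCG) : Prop :=
  [/\ 0 < Delta M /\ (forall w, 0 < Psi M w) /\ \sum_(w < NW) Psi M w = 1,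
      (forall i t, 0 < alpha M i t /\ 0 < beta M i t),
      (forall i j, adj M i j = adj M j i) /\ (forall i, ~~ adj M i i),
      (forall i j, gamma_tr M i j = gamma_tr M j i /\ Qtr M i j = Qtr M j i)
    & forall i, [/\ 0 < cs M i, 0 < eta_ch M i <= 1, 0 < eta_dis M i <= 1,
                    0 < zeta_ch M i & 0 < zeta_dis M i] ].

Record profile (R : realType) (I NT NW NWG NCG : nat) := Profile {
  qwg : 'I_NWG -> 'I_NT -> 'I_NW -> R;
  qcg : 'I_NCG -> 'I_NT -> 'I_NW -> R;
  qdis : 'I_I -> 'I_NT -> 'I_NW -> R;
  qch : 'I_I -> 'I_NT -> 'I_NW -> R;
  qs : 'I_I -> 'I_NT -> 'I_NW -> R;
  qtr : 'I_I -> 'I_I -> 'I_NT -> 'I_NW -> R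
}.

Section Game.
Variables (R : realType) (I NT NW NWG NCG : nat).
Variable M : market R I NT NW NWG NCG.
Variable Qs : 'I_I -> R.
Local Notation profile := (profile R I NT NW NWG NCG).

Definition price (p : profile) (i : 'I_I) (t : 'I_NT) (w : 'I_NW) : R :=
  alpha M i t * expR (- (beta M i t * (qs p i t w
      + \sum_(m < NWG | locW M m == i) qwg p m t w
      + \sum_(n < NCG | locC M n == i) qcg p n t w
      + \sum_(j < I | adj M i j) qtr p i j t w))).

Definition expect (f : 'I_NT -> 'I_NW -> R) : R :=
  \sum_(w < NW) Psi M w * \sum_(t < NT) f t w.

Definition wind_obj (p : profile) (m : 'I_NWG) : R :=
  expect (fun t w => price p (locW M m) t w * qwg p m t w).
Definition wind_feas (m : 'I_NWG) (x : 'I_NT -> 'I_NW -> R) : Prop :=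
  forall t w, 0 <= x t w <= Qwg M m t w.
Definition set_wind (p : profile) (m : 'I_NWG) x : profile :=
  Profile (fun m' => if m' == m then x else qwg p m') (qcg p) (qdis p)
          (qch p) (qs p) (qtr p).

Definition storage_obj (p : profile) (i : 'I_I) : R :=
  let g := (gamma_s M i)%:R in
  expect (fun t w => price p i t w * qs p i t w
      - cs M i * (qdis p i t w + qch p i t w)
      - g * (price p i t w * qs p i t w + price p i t w / beta M i t)).
Definition storage_feas (i : 'I_I) (dis ch s : 'I_NT -> 'I_NW -> R) : Prop :=
  forall t w,
  [/\ 0 <= dis t w /\ 0 <= ch t w,
      s t w = eta_dis M i * dis t w - ch t w / eta_ch M i,
      dis t w <= zeta_dis M i * Qs i,
      ch t w <= zeta_ch M i * Qs i
    & 0 <= (\sum_(k < NT | (k <= t)%N) (ch k w - dis k w)) * Delta M <= Qs i].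
Definition set_storage (p : profile) (i : 'I_I) dis ch s : profile :=
  Profile (qwg p) (qcg p)
    (fun i' => if i' == i then dis else qdis p i')
    (fun i' => if i' == i then ch else qch p i')
    (fun i' => if i' == i then s else qs p i') (qtr p).

Definition cg_obj (p : profile) (n : 'I_NCG) : R :=
  expect (fun t w => (price p (locC M n) t w - ccg M n) * qcg p n t w).
Definition cg_feas (n : 'I_NCG) (x : 'I_NT -> 'I_NW -> R) : Prop :=
  (forall t w, 0 <= x t w <= Qcg M n) /\
  (forall (t t' : 'I_NT) w, t = t'.+1 :> nat ->
     x t w - x t' w <= Rup M n /\ x t' w - x t w <= Rdn M n).
Definition set_cg (p : profile) (n : 'I_NCG) x : profile :=
  Profile (qwg p) (fun n' => if n' == n then x else qcg p n') (qdis p)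
          (qch p) (qs p) (qtr p).

Definition tr_obj (p : profile) (i j : 'I_I) : R :=
  let g := (gamma_tr M i j)%:R in
  expect (fun t w =>
    (1 - g) * (price p j t w * qtr p j i t w + price p i t w * qtr p i j t w)
    + g * (- (price p j t w / beta M j t) - price p i t w / beta M i t)).
Definition tr_feas (i j : 'I_I) (xij xji : 'I_NT -> 'I_NW -> R) : Prop :=
  forall t w, xij t w = - xji t w /\ - Qtr M i j <= xij t w <= Qtr M i j.
Definition set_tr (p : profile) (i j : 'I_I) xij xji : profile :=
  Profile (qwg p) (qcg p) (qdis p) (qch p) (qs p)
    (fun a b => if (a == i) && (b == j) then xij
                else if (a == j) && (b == i) then xji else qtr p a b).

Definition nash_equilibrium (p : profile) : Prop :=
  [/\ forall m, wind_feas m (qwg p m) /\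
        (forall x, wind_feas m x -> wind_obj (set_wind p m x) m <= wind_obj p m),
      forall i, storage_feas i (qdis p i) (qch p i) (qs p i) /\
        (forall dis ch s, storage_feas i dis ch s ->
           storage_obj (set_storage p i dis ch s) i <= storage_obj p i),
      forall n, cg_feas n (qcg p n) /\
        (forall x, cg_feas n x -> cg_obj (set_cg p n x) n <= cg_obj p n)
    & forall i j, adj M i j ->
        tr_feas i j (qtr p i j) (qtr p j i) /\
        (forall xij xji, tr_feas i j xij xji ->
           tr_obj (set_tr p i j xij xji) i j <= tr_obj p i j) ].

End Game.

(* Main.v *)
Require Import Defs.
From mathcomp Require Import all_boot all_order all_algebra.
From mathcomp Require Import reals sequences exp.
From mathcomp Require Import ring lra.
Import Order.TTheory GRing.Theory Num.Theory.
Local Open Scope ring_scope.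

Lemma seq_lb (R : realType) (T : eqType) (f : T -> R) (s : seq T) :
  (forall j, j \in s -> 0 < f j) -> exists2 e : R, 0 < e & forall j, j \in s -> e <= f j.
Proof.
elim: s => [|x s IH] H; first by exists 1 => //.
have [e e0 He] : exists2 e : R, 0 < e & forall j, j \in s -> e <= f j.
  by apply: IH => j js; apply: H; rewrite inE js orbT.
have fx : 0 < f x by apply: H; rewrite inE eqxx.
exists (Num.min e (f x)); first by rewrite lt_min e0 fx.
move=> j; rewrite inE => /orP[/eqP->|js]; first by rewrite ge_min lexx orbT.
by rewrite ge_min He.
Qed.

Lemma fin_lb (R : realType) (n : nat) (P : pred 'I_n) (f : 'I_n -> R) :
  (forall j, P j -> 0 < f j) -> exists2 e : R, 0 < e & forall j, P j -> e <= f j.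
Proof.
move=> H; have [e e0 He] : exists2 e : R, 0 < e & forall j, j \in [seq j <- enum 'I_n | P j] -> e <= f j.
  by apply: seq_lb => j; rewrite mem_filter => /andP[Pj _]; apply: H.
by exists e => // j Pj; apply: He; rewrite mem_filter Pj mem_enum.
Qed.

Lemma sum_ind (R : realType) (n : nat) (P : pred 'I_n) (a : 'I_n) (x : R) :
  \sum_(m < n | P m) (if m == a then x else 0) = if P a then x else 0.
Proof.
case: (boolP (P a)) => Pa.
  rewrite (bigD1 a) //= eqxx big1 ?addr0 // => m /andP[_ /negbTE ->] //.
by rewrite big1 // => m Pm; case: eqP => // mE; rewrite -mE Pm in Pa.
Qed.

Lemma sum_strict (R : realType) (n : nat) (F G : 'I_n -> R) (a : 'I_n) :
  (forall j, F j <= G j) -> F a < G a -> \sum_(j < n) F j < \sum_(j < n) G j.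
Proof.
move=> Hle Hlt; rewrite (bigD1 a) //= [X in _ < X](bigD1 a) //=.
by apply: ltr_leD => //; apply: ler_sum => j _.
Qed.

Lemma H_mono (R : realType) (al be A g x y : R) :
  0 < al -> 0 < be -> (g = 0 \/ g = 1) -> x <= y -> y <= 0 ->
  let P := fun z => al * expR (- (be * (z + A))) in
  P x * x - g * (P x * x + P x / be) <= P y * y - g * (P y * y + P y / be).
Proof.
move=> al0 be0 hg xy y0; set P := fun z => _.
have Py0 : 0 < P y by rewrite /P mulr_gt0 // expR_gt0.
have Pxy : P y <= P x.
  by rewrite /P ler_pM2l // ler_expR lerN2 ler_pM2l // lerD2r.
have ib : 0 < be^-1 by rewrite invr_gt0.
case: hg => ->; rewrite /=.
  rewrite !mul0r !subr0 /=.
  have h1 : P x * x <= P y * x by rewrite ler_wnM2r // (le_trans xy y0).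
  have h2 : P y * x <= P y * y by rewrite ler_pM2l.
  exact: le_trans h1 h2.
rewrite !mul1r !opprD !addrA !subrr !add0r lerN2 /= !(mulrC _ be^-1) ler_pM2l //.
Qed.


Definition Tf (R : realType) (al be A g cs x dd cc : R) :=
  al * expR (- (be * (x + A))) * x - cs * (dd + cc)
  - g * (al * expR (- (be * (x + A))) * x + al * expR (- (be * (x + A))) / be).
Arguments Tf {R}.

Lemma Tf_le (R : realType) (al be A g cs x y dd cc dd' cc' : R) :
  0 < al -> 0 < be -> (g = 0 \/ g = 1) -> 0 <= cs ->
  (x = y \/ (x <= y /\ y <= 0)) -> dd' <= dd -> cc' <= cc ->
  Tf al be A g cs x dd cc <= Tf al be A g cs y dd' cc'.
Proof.
move=> al0 be0 hg cs0 hxy hd hc.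
have hH : al * expR (- (be * (x + A))) * x - g * (al * expR (- (be * (x + A))) * x + al * expR (- (be * (x + A))) / be)
  <= al * expR (- (be * (y + A))) * y - g * (al * expR (- (be * (y + A))) * y + al * expR (- (be * (y + A))) / be).
  case: hxy => [->//|[xy y0]].
  by have := @H_mono R al be A g x y al0 be0 hg xy y0.
have hcost : cs * (dd' + cc') <= cs * (dd + cc) by rewrite ler_wpM2l // lerD.
rewrite /Tf; move: hH hcost.
set a1 := al * expR _ * x; set a2 := al * expR _ * y.
set b1 := al * expR _ / be; set b2 := al * expR _ / be.
move=> hH hcost; lra.
Qed.

Lemma Tf_lt (R : realType) (al be A g cs x y dd cc dd' cc' : R) :
  0 < al -> 0 < be -> (g = 0 \/ g = 1) -> 0 < cs ->
  (x = y \/ (x <= y /\ y <= 0)) -> dd' <= dd -> cc' < cc ->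
  Tf al be A g cs x dd cc < Tf al be A g cs y dd' cc'.
Proof.
move=> al0 be0 hg cs0 hxy hd hc.
have hH : al * expR (- (be * (x + A))) * x - g * (al * expR (- (be * (x + A))) * x + al * expR (- (be * (x + A))) / be)
  <= al * expR (- (be * (y + A))) * y - g * (al * expR (- (be * (y + A))) * y + al * expR (- (be * (y + A))) / be).
  case: hxy => [->//|[xy y0]].
  by have := @H_mono R al be A g x y al0 be0 hg xy y0.
have hcost : cs * (dd' + cc') < cs * (dd + cc) by rewrite ltr_pM2l //; lra.
rewrite /Tf; move: hH hcost.
set a1 := al * expR _ * x; set a2 := al * expR _ * y.
set b1 := al * expR _ / be; set b2 := al * expR _ / be.
move=> hH hcost; lra.
Qed.

Lemma sk_neg (R : realType) (ed ec d c b : R) : 0 < ed -> 0 < ec -> ed * ec <= 1 ->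
  0 <= d -> d <= c -> b <= c -> 0 <= b ->
  ed * d - c / ec + (b - ed * ec * b) / ec <= 0.
Proof.
move=> ed0 ec0 u1 d0 dc bc b0.
have -> : ed * d - c / ec + (b - ed * ec * b) / ec = (ed * ec * d - c + (b - ed * ec * b)) / ec.
  by field; exact: lt0r_neq0.
apply: mulr_le0_ge0; last by rewrite invr_ge0 ltW.
have h1 : 0 <= (1 - ed * ec) * (c - b) by rewrite mulr_ge0 // subr_ge0.
have h2 : 0 <= (ed * ec) * (c - d) by rewrite mulr_ge0 ?subr_ge0 // mulr_ge0 // ltW.
nra.
Qed.

Theorem proposition1 (R : realType) (I NT NW NWG NCG : nat)
    (M : market R I NT NW NWG NCG) (Qs : 'I_I -> R) :
  market_wf M -> (forall i, 0 <= Qs i) ->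
  forall p : profile R I NT NW NWG NCG, nash_equilibrium M Qs p ->
  forall (i : 'I_I) (t : 'I_NT) (w : 'I_NW),
    ~ (0 < qch p i t w /\ 0 < qdis p i t w).
Proof.
move=> [[D0 [Psi0 _]] hab _ _ hstor] Qs0 p [_ hNE _ _] i t w [hch hdis].
have [hfeas hopt] := hNE i.
have [cs0 /andP[ec0 ec1] /andP[ed0 ed1] _ _] := hstor i.
set d := qdis p i in hfeas hopt hdis *; set c := qch p i in hfeas hopt hch *.
set s := qs p i in hfeas hopt *.
set ed := eta_dis M i in hfeas hopt ed0 ed1 *.
set ec := eta_ch M i in hfeas hopt ec0 ec1 *.
set u := ed * ec.
have u0 : 0 < u by rewrite mulr_gt0.
have u1 : u <= 1 by rewrite mulr_ile1 // ltW.
pose L (j : 'I_NT) := \sum_(m < NT | (m <= j)%N) (c m w - d m w).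
pose S (k : 'I_NT) := (k <= t)%N && [forall j : 'I_NT, ((k <= j)%N && (j < t)%N) ==> (0 < L j)].
have St : S t.
  rewrite /S leqnn /=; apply/forallP => j; apply/implyP => /andP[h1 h2].
  by move: (leq_ltn_trans h1 h2); rewrite ltnn.
have [k Sk kmin] := arg_minnP (fun k : 'I_NT => (k : nat)) St.
move: Sk; rewrite /S => /andP[kt /forallP Lpos].
have Lpos' : forall j : 'I_NT, (k <= j)%N -> (j < t)%N -> 0 < L j.
  by move=> j h1 h2; move: (Lpos j); rewrite h1 h2.
pose Lp := \sum_(m < NT | (m < k)%N) (c m w - d m w).
have hLk : L k = Lp + (c k w - d k w).
  rewrite /L (bigD1 k) //= addrC; congr (_ + _); apply: eq_bigl => m.
  by rewrite ltn_neqAle andbC.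
have hLp : Lp <= 0.
  case: (posnP k) => [k0|kpos].
    by rewrite /Lp big_pred0 // => m; rewrite k0 ltn0.
  have k'lt : (k.-1 < NT)%N by rewrite (leq_ltn_trans (leq_pred k)).
  pose k' := Ordinal k'lt.
  have nS : ~~ S k'.
    apply/negP => Sk'; have := kmin k' Sk'; rewrite /= => hh.
    have hp : (k.-1 < k)%N by rewrite ltn_predL.
    by move: (leq_ltn_trans hh hp); rewrite ltnn.
  move: nS; rewrite /S /= (leq_trans (leq_pred k) kt) /= negb_forall => /existsP[j].
  rewrite negb_imply => /andP[/andP[h1 h2] hL].
  have jk : nat_of_ord j = k.-1.
    apply/eqP; rewrite eqn_leq h1 andbT; case: (ltnP j k) => // kj.
      by rewrite -ltnS prednK.
    by rewrite (Lpos' j kj h2) in hL.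
  rewrite leNgt; move: hL; congr (~~ (_ < _)); rewrite /L /Lp; apply: eq_bigl => m.
  by rewrite jk -ltnS prednK.
have [[dk0 ck0] sk _ _ /andP[Lk0 _]] := hfeas k w.
have hk : 0 < c k w /\ d k w <= c k w.
  case: (ltnP k t) => kt'.
    have := Lpos' k (leqnn k) kt'; rewrite hLk => h; split; lra.
  have ekt : k = t by apply/val_inj/eqP; rewrite eqn_leq kt kt'.
  have hLt : 0 <= L k.
    by move: Lk0; rewrite /L => h; nra.
  move: hLt; rewrite hLk => h; split; first by rewrite ekt.
  lra.
have [e0 e00 He0] : exists2 e : R, 0 < e &
    forall j : 'I_NT, (k <= j)%N && (j < t)%N -> e <= L j.
  by apply: fin_lb => j /andP[h1 h2]; apply: Lpos'.
pose b := Num.min (Num.min (d t w) (c t w)) (Num.min (c k w) e0).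
have b0 : 0 < b by rewrite !lt_min hdis hch e00 (proj1 hk).
have bdt : b <= d t w by rewrite !ge_min lexx.
have bct : b <= c t w by rewrite !ge_min lexx !orbT.
have bck : b <= c k w by rewrite !ge_min lexx !orbT.
have be0 : b <= e0 by rewrite !ge_min lexx !orbT.
have ub0 : 0 <= u * b by rewrite mulr_ge0 // ltW.
have ub1 : u * b <= b by rewrite ler_piMl // ltW.
pose r := b - u * b.
pose dis' := fun t0 w0 => d t0 w0 - (if (w0 == w) && (t0 == t) then b else 0).
pose ch' := fun t0 w0 => c t0 w0 - (if (w0 == w) && (t0 == t) then u * b else 0)
                                - (if (w0 == w) && (t0 == k) then r else 0).
pose s' := fun t0 w0 => s t0 w0 + (if (w0 == w) && (t0 == k) then r / ec else 0).
have hlev : forall (t0 : 'I_NT) (w0 : 'I_NW),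
  \sum_(m < NT | (m <= t0)%N) (ch' m w0 - dis' m w0) =
  \sum_(m < NT | (m <= t0)%N) (c m w0 - d m w0) +
  (if w0 == w then (if (t <= t0)%N then r else 0) - (if (k <= t0)%N then r else 0) else 0).
  move=> t0 w0; case: eqP => [->|hw].
    rewrite -(@sum_ind R NT (fun m : 'I_NT => (m <= t0)%N) t r).
    rewrite -(@sum_ind R NT (fun m : 'I_NT => (m <= t0)%N) k r) -sumrB -big_split /=.
    apply: eq_bigr => m _; rewrite /ch' /dis' eqxx /= /r.
    by case: (m == t); case: (m == k); rewrite /=; ring.
  rewrite addr0; apply: eq_bigr => m _; rewrite /ch' /dis'.
  have hw0 : (w0 == w) = false by apply/eqP.
  by rewrite hw0 /= !subr0.
have hfeas' : storage_feas M Qs i dis' ch' s'.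
  move=> t0 w0; have [[d0 c0] seq dle cle /andP[Ll Lu]] := hfeas t0 w0.
  have r0 : 0 <= r by rewrite /r subr_ge0.
  have rb : r <= b by rewrite /r lerBlDr lerDl.
  split.
  - rewrite /dis' /ch'; split.
      by case: ifP => [/andP[/eqP -> /eqP ->]|_]; lra.
    case: ifP => [/andP[/eqP ew /eqP et]|_]; case: ifP => [/andP[/eqP ew2 /eqP ek]|_].
    + rewrite ew et /r; lra.
    + rewrite ew et /r; lra.
    + rewrite ew2 ek /r; lra.
    + lra.
  - rewrite /s' /dis' /ch' seq.
    have h1 : forall C, (if C then u * b else 0) = u * (if C then b else 0).
      by case; rewrite ?mulr0.
    have h2 : forall C, (if C then r / ec else 0) = (if C then r else 0) / ec.
      by case; rewrite ?mul0r.
    rewrite h1 h2.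
    move: (if _ then b else 0) (if _ then r else 0) => X Y.
    rewrite /u -/ed -/ec; field; exact: lt0r_neq0.
  - rewrite /dis'; case: ifP => _; lra.
  - rewrite /ch'; case: ifP => _; case: ifP => _; lra.
  - rewrite hlev; case: eqP => [ew|_]; last by rewrite addr0 Ll Lu.
    case: (leqP t t0) => tt0.
      by rewrite (leq_trans kt tt0) subrr addr0 Ll Lu.
    case: (leqP k t0) => kt0; last by rewrite subrr addr0 Ll Lu.
    have := He0 t0; rewrite kt0 tt0 /L -ew => /(_ isT) hX.
    move: hX Ll Lu; set X := \sum_(_ < _ | _) _ => hX Ll Lu.
    have hXr : r <= X by lra.
    apply/andP; split; nra.
have Hle := hopt dis' ch' s' hfeas'.
pose Rst t0 w0 := \sum_(m < NWG | locW M m == i) qwg p m t0 w0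
      + \sum_(n < NCG | locC M n == i) qcg p n t0 w0
      + \sum_(j < I | adj M i j) qtr p i j t0 w0.
have Pp : forall t0 w0, price M p i t0 w0 =
   alpha M i t0 * expR (- (beta M i t0 * (s t0 w0 + Rst t0 w0))).
  by move=> t0 w0; rewrite /price /Rst !addrA.
have Pp' : forall t0 w0, price M (set_storage p i dis' ch' s') i t0 w0 =
   alpha M i t0 * expR (- (beta M i t0 * (s' t0 w0 + Rst t0 w0))).
  by move=> t0 w0; rewrite /price /Rst !addrA /set_storage [qs _ _]/= eqxx.
pose g : R := (gamma_s M i)%:R.
have hg : g = 0 \/ g = 1 by rewrite /g; case: (gamma_s M i); [right|left].
have Eqs : qs (set_storage p i dis' ch' s') i = s' by rewrite /set_storage [qs _ _]/= eqxx.
have Eqd : qdis (set_storage p i dis' ch' s') i = dis' by rewrite /set_storage [qdis _ _]/= eqxx.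
have Eqc : qch (set_storage p i dis' ch' s') i = ch' by rewrite /set_storage [qch _ _]/= eqxx.
have E1 : storage_obj M p i = expect M (fun t0 w0 => Tf (alpha M i t0) (beta M i t0)
    (Rst t0 w0) g (cs M i) (s t0 w0) (d t0 w0) (c t0 w0)).
  rewrite /storage_obj /expect; apply: eq_bigr => w0 _; congr (_ * _); apply: eq_bigr => t0 _.
  by rewrite Pp /Tf.
have E2 : storage_obj M (set_storage p i dis' ch' s') i = expect M (fun t0 w0 => Tf (alpha M i t0) (beta M i t0)
    (Rst t0 w0) g (cs M i) (s' t0 w0) (dis' t0 w0) (ch' t0 w0)).
  rewrite /storage_obj /expect; apply: eq_bigr => w0 _; congr (_ * _); apply: eq_bigr => t0 _.
  by rewrite Pp' Eqs Eqd Eqc /Tf.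
have r0 : 0 <= r by rewrite /r subr_ge0.
have Hxy : forall t0 w0, s t0 w0 = s' t0 w0 \/ (s t0 w0 <= s' t0 w0 /\ s' t0 w0 <= 0).
  move=> t0 w0; rewrite /s'; case: ifP => [/andP[/eqP-> /eqP->]|_]; last by left; rewrite addr0.
  right; split; first by rewrite lerDl divr_ge0 // ltW.
  rewrite sk -/ed -/ec /r /u; apply: sk_neg => //; first exact: (proj2 hk).
  exact: ltW.
have Hd : forall t0 w0, dis' t0 w0 <= d t0 w0.
  by move=> t0 w0; rewrite /dis' lerBlDr lerDl; case: ifP => _ //; exact: ltW.
have Hc : forall t0 w0, ch' t0 w0 <= c t0 w0.
  move=> t0 w0; rewrite /ch'; case: ifP => _; case: ifP => _; lra.
have Hct : ch' t w < c t w.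
  have ubp : 0 < u * b by rewrite mulr_gt0.
  rewrite /ch' !eqxx /=; case: ifP => _; lra.
have Hlt : storage_obj M p i < storage_obj M (set_storage p i dis' ch' s') i.
  rewrite E1 E2 /expect; apply: (@sum_strict R NW _ _ w).
  - move=> w0; rewrite ler_wpM2l ?(ltW (Psi0 w0)) //; apply: ler_sum => t0 _.
    apply: Tf_le; rewrite ?(proj1 (hab i t0)) ?(proj2 (hab i t0)) ?(ltW cs0) //.
  - rewrite ltr_pM2l //; apply: (@sum_strict R NT _ _ t) => [t0|].
      apply: Tf_le; rewrite ?(proj1 (hab i t0)) ?(proj2 (hab i t0)) ?(ltW cs0) //.
    apply: Tf_lt; rewrite ?(proj1 (hab i t)) ?(proj2 (hab i t)) //.
by move: Hle; rewrite leNgt Hlt.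
Qed.
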